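(* Let $p$ be a prime and $\mathcal{A}$ an irreducible $3\times3$ znz-pattern. Then $\mathcal{A}$ is potentially nilpotent over $\mathbb{Z}_p$ if and only if, up to equivalence, one of the following holds: 1. $\mathcal{A}$ is one of $\begin{bmatrix}0&*&0\\ *&0&*\\ 0&*&0\end{bmatrix}$, $\begin{bmatrix}*&*&0\\ *&0&*\\ *&0&*\end{bmatrix}$, $\begin{bmatrix}0&*&0\\ *&*&*\\ *&0&*\end{bmatrix}$, $\begin{bmatrix}*&*&*\\ *&*&*\\ *&*&0\end{bmatrix}$ (any $p$); 2. $\mathcal{A}$ is one of $\begin{bmatrix}*&*&0\\ *&0&*\\ 0&*&*\end{bmatrix}$, $\begin{bmatrix}*&*&*\\ *&*&*\\ *&0&0\end{bmatrix}$, $\begin{bmatrix}*&*&*\\ *&0&*\\ *&0&*\end{bmatrix}$, $\begin{bmatrix}*&*&*\\ *&*&*\\ *&0&*\end{bmatrix}$, $\begin{bmatrix}0&*&*\\ *&0&*\\ *&*&0\end{bmatrix}$, $\begin{bmatrix}*&*&*\\ *&*&*\\ *&*&*\end{bmatrix}$, and $p\neq2$; 3. $\mathcal{A}$ is one of $\begin{bmatrix}*&*&0\\ *&*&*\\ 0&*&*\end{bmatrix}$, $\begin{bmatrix}*&*&0\\ *&*&*\\ *&0&*\end{bmatrix}$, $\begin{bmatrix}0&*&*\\ *&*&*\\ *&0&*\end{bmatrix}$, and $p\notin\{2,3\}$; 4. $\mathcal{A}=\begin{bmatrix}*&*&0\\ 0&*&*\\ *&0&*\end{bmatrix}$ and the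 polynomial $x^3-1$ splits into three linear factors over $\mathbb{Z}_p$.
   Context: A znz-pattern is a square matrix with entries in $\{*,0\}$; a realization over $\mathbb{F}$ is a matrix over $\mathbb{F}$ with nonzero entries exactly at the $*$ positions; potentially nilpotent over $\mathbb{F}$ means some realization is nilpotent. The digraph $D(\mathcal{A})$ has vertices $1,\ldots,n$ and an arc $(i,j)$ when $\mathcal{A}_{i,j}=*$; $\mathcal{A}$ is irreducible iff $D(\mathcal{A})$ is strongly connected. Two patterns are equivalent if they have the same digraph up to relabeling of vertices (i.e., they are permutation similar). $\mathbb{Z}_p$ is the field with $p$ elements. *)

(* Defs.v *)
From HB Require Import structures.
From mathcomp Require Import all_boot all_order all_algebra all_fingroup.
Set Implicit Arguments. Unset Strict Implicit. Unset Printing Implicit Defensive.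
Import GRing.Theory.
Local Open Scope ring_scope.

(* A znz-pattern of order n: a boolean matrix, true = '*', false = '0'. *)
Definition znz_pattern (n : nat) := 'M[bool]_n.

Definition pat_rel n (P : znz_pattern n) : rel 'I_n := fun i j => P i j.

Definition pat_irreducible n (P : znz_pattern n) : Prop :=
  forall i j : 'I_n, connect (pat_rel P) i j.

Definition realizes (F : nzRingType) n (A : 'M[F]_n) (P : znz_pattern n) : Prop :=
  forall i j, (A i j != 0) = P i j.

Definition nilpotent_mx (F : nzRingType) n (A : 'M[F]_n) : Prop :=
  exists k : nat, A ^+ k = 0.

Definition potentially_nilpotent (F : nzRingType) n (P : znz_pattern n) : Prop :=
  exists A : 'M[F]_n, realizes A P /\ nilpotent_mx A.

Definition pat_equiv n (P Q : znz_pattern n) : Prop :=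
  exists s : 'S_n, forall i j, P i j = Q (s i) (s j).

Definition mkpat3 (s : seq bool) : znz_pattern 3 :=
  \matrix_(i < 3, j < 3) nth false s (3 * i + j)%N.


Definition pats_case1 : seq (znz_pattern 3) := map mkpat3
  [:: [:: false; true; false;  true; false; true;  false; true; false];
      [:: true; true; false;   true; false; true;  true; false; true];
      [:: false; true; false;  true; true; true;   true; false; true];
      [:: true; true; true;    true; true; true;   true; true; false]].

Definition pats_case2 : seq (znz_pattern 3) := map mkpat3
  [:: [:: true; true; false;   true; false; true;  false; true; true];
      [:: true; true; true;    true; true; true;   true; false; false];
      [:: true; true; true;    true; false; true;  true; false; true];
      [:: true; true; true;    true; true; true;   true; false; true];
      [:: false; true; true;   true; false; true;  true; true; false];
      [:: true; true; true;    true; true; true;   true; true; true]].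

Definition pats_case3 : seq (znz_pattern 3) := map mkpat3
  [:: [:: true; true; false;   true; true; true;   false; true; true];
      [:: true; true; false;   true; true; true;   true; false; true];
      [:: false; true; true;   true; true; true;   true; false; true]].

Definition pat_case4 : znz_pattern 3 :=
  mkpat3 [:: true; true; false;  false; true; true;  true; false; true].

Definition cube_unity_splits (F : fieldType) : Prop :=
  exists a b c : F, ('X^3 - 1 : {poly F}) = ('X - a%:P) * ('X - b%:P) * ('X - c%:P).

(* Main.v *)
Require Import Defs.
From HB Require Import structures.
From mathcomp Require Import all_boot all_order all_algebra all_fingroup all_field.
From Stdlib Require Import Ring.
Set Implicit Arguments. Unset Strict Implicit. Unset Printing Implicit Defensive.
Import GRing.Theory.
Local Open Scope ring_scope.

Definition pl (R : comNzRingType) (x y : R) : R := x + y.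
Definition ml (R : comNzRingType) (x y : R) : R := x * y.
Definition ng (R : comNzRingType) (x : R) : R := - x.
Definition zr (R : comNzRingType) : R := 0.
Definition on (R : comNzRingType) : R := 1.
Definition sb (R : comNzRingType) (x y : R) : R := pl x (ng y).
Lemma Rth (R : comNzRingType) : @ring_theory R (zr R) (on R) (@pl R) (@ml R) (@sb R) (@ng R) eq.
Proof. rewrite /pl/ml/sb/ng/zr/on; split=> //; [exact: add0r|exact: addrC|exact: addrA|exact: mul1r|exact: mulrC|exact: mulrA|exact: mulrDl|move=> x; exact: subrr]. Qed.
Lemma addE (R : comNzRingType) (x y : R) : x + y = pl x y. by []. Qed.
Lemma mulE (R : comNzRingType) (x y : R) : x * y = ml x y. by []. Qed.
Lemma oppE (R : comNzRingType) (x : R) : - x = ng x. by []. Qed.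
Lemma zeroE (R : comNzRingType) : 0 = zr R. by []. Qed.
Lemma oneE (R : comNzRingType) : 1 = on R. by []. Qed.
Lemma ringify (R : comNzRingType) (x y : R) : x = y -> x = y. by []. Qed.
Ltac rg := apply: ringify; rewrite ?exprS ?expr0 ?addE ?mulE ?oppE ?zeroE ?oneE; ring.

Definition i0 : 'I_3 := @Ordinal 3 0 isT.
Definition i1 : 'I_3 := @Ordinal 3 1 isT.
Definition i2 : 'I_3 := @Ordinal 3 2 isT.

Lemma ord3 (i : 'I_3) : i = i0 \/ i = i1 \/ i = i2.
Proof. case: i => [[|[|[|k]]] Hk]; [left|right;left|right;right|done]; exact: val_inj. Qed.

Lemma sum3 (R : nmodType) (f : 'I_3 -> R) : \sum_(k < 3) f k = f i0 + f i1 + f i2.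
Proof.
rewrite !big_ord_recl big_ord0 addr0 addrA.
by congr (f _ + f _ + f _); apply: val_inj.
Qed.

Section Gen.
Variable F : fieldType.
Add Ring Fring : (Rth F).

Implicit Types N : 'M[F]_3.

Definition tr3 N := N i0 i0 + N i1 i1 + N i2 i2.
Definition e3 N := N i0 i0 * N i1 i1 - N i0 i1 * N i1 i0 + N i0 i0 * N i2 i2 - N i0 i2 * N i2 i0
  + N i1 i1 * N i2 i2 - N i1 i2 * N i2 i1.
Definition det3 N := N i0 i0 * (N i1 i1 * N i2 i2 - N i1 i2 * N i2 i1)
  - N i0 i1 * (N i1 i0 * N i2 i2 - N i1 i2 * N i2 i0)
  + N i0 i2 * (N i1 i0 * N i2 i1 - N i1 i1 * N i2 i0).

Lemma mul3E (N M : 'M[F]_3) i j : (N * M) i j = N i i0 * M i0 j + N i i1 * M i1 j + N i i2 * M i2 j.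
Proof. by rewrite -mulmxE mxE sum3. Qed.

Lemma mx3P (N M : 'M[F]_3) : (forall i j, N i j = M i j) -> N = M.
Proof. by move=> H; apply/matrixP => i j. Qed.

Lemma CH3 N : N ^+ 3 = tr3 N *: N ^+ 2 - e3 N *: N + det3 N *: 1.
Proof.
apply/matrixP => i j.
rewrite !exprS expr0 !mulr1 !mul3E !mxE ?mul3E.
rewrite /tr3 /e3 /det3.
have [->|[->|->]] := ord3 i; have [->|[->|->]] := ord3 j; rewrite /= ?sum3 ?mulr1n ?mulr0n; rg.
Qed.

Lemma nil_of_inv N : tr3 N = 0 -> e3 N = 0 -> det3 N = 0 -> N ^+ 3 = 0.
Proof. by rewrite CH3 => -> -> ->; rewrite !scale0r subrr addr0. Qed.

Lemma descent (P : nat -> Prop) k : P k -> (forall j, P j.+1 -> P j) -> P 0%N.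
Proof. by elim: k => // k IH Hk Hs; apply: IH => //; apply: Hs. Qed.

Lemma powCH N j : N ^+ (j + 3) = tr3 N *: N ^+ (j + 2) - e3 N *: N ^+ j.+1 + det3 N *: N ^+ j.
Proof.
rewrite addnC exprD CH3 mulrDl mulrBl -(scalerAl (tr3 N) (N ^+ 2)) -(scalerAl (e3 N) N) -(scalerAl (det3 N) 1) mul1r -exprD -exprS addnC.
by [].
Qed.

Lemma one3_neq0 : (1 : 'M[F]_3) != 0.
Proof. by apply/eqP => /matrixP /(_ i0 i0); rewrite !mxE /= => /eqP; rewrite oner_eq0. Qed.

Lemma inv_of_nil N k : N ^+ k = 0 -> tr3 N = 0 /\ e3 N = 0 /\ det3 N = 0.
Proof.
move=> Hk.
have Hp : forall j, (k <= j)%N -> N ^+ j = 0.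
  by move=> j /subnKC <-; rewrite exprD Hk mul0r.
have Hd : det3 N = 0.
  apply/eqP; apply/negPn/negP => dn0.
  have : N ^+ 0 = 0.
    apply: (@descent (fun j => N ^+ j = 0) k); first exact: Hp.
    move=> j /= Hj.
    have H2 : N ^+ (j + 2) = 0 by rewrite addn2 exprS Hj mulr0.
    have H3 : N ^+ (j + 3) = 0 by rewrite (addnS j 2) exprS H2 mulr0.
    move: (powCH N j); rewrite H3 H2 Hj !scaler0 subrr add0r => /esym/eqP.
    by rewrite scaler_eq0 (negPf dn0) => /eqP.
  by rewrite expr0 => /eqP; rewrite (negPf one3_neq0).
have He : e3 N = 0.
  apply/eqP; apply/negPn/negP => en0.
  have : N ^+ 1 = 0.
    apply: (@descent (fun j => N ^+ j.+1 = 0) k); first exact: Hp.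
    move=> j /= Hj.
    have H3 : N ^+ (j + 3) = 0 by rewrite addn3 exprS Hj mulr0.
    have H2 : N ^+ (j + 2) = 0 by rewrite addn2 Hj.
    move: (powCH N j); rewrite H3 H2 Hd scaler0 scale0r addr0 add0r => /esym/eqP.
    by rewrite oppr_eq0 scaler_eq0 (negPf en0) => /eqP.
  rewrite expr1 => N0; move/eqP: en0; apply; rewrite N0 /e3 !mxE; rg.
have Ht : tr3 N = 0.
  have T : tr3 (N ^+ 2) = tr3 N ^+ 2 - (1+1) * e3 N.
    rewrite /tr3 !exprS expr0 !mulr1 !mul3E /e3; rg.
  apply/eqP; apply/negPn/negP => tn0.
  have N2 : N ^+ 2 = 0.
    apply: (@descent (fun j => N ^+ j.+2 = 0) k).
      by apply: Hp; rewrite -addn2 leq_addr.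
    move=> j /= Hj.
    move: (powCH N j); rewrite addn3 Hj He Hd !scale0r subr0 addr0 => /esym/eqP.
    by rewrite scaler_eq0 (negPf tn0) addn2 => /eqP.
  have Z : tr3 (0 : 'M[F]_3) = 0 by rewrite /tr3 !mxE !addr0.
  move: T; rewrite N2 Z He mulr0 subr0 => /esym/eqP.
  by rewrite expf_eq0 /= (negPf tn0).
done.
Qed.


Lemma PN_iff (P : 'M[bool]_3) : potentially_nilpotent F P <->
  exists N : 'M[F]_3, realizes N P /\ tr3 N = 0 /\ e3 N = 0 /\ det3 N = 0.
Proof.
split.
  by move=> [N [R [k Hk]]]; exists N; split => //; exact: inv_of_nil Hk.
move=> [N [R [Ht [He Hd]]]]; exists N; split => //; exists 3%N; exact: nil_of_inv.
Qed.

Definition mk3 (l : seq F) : 'M[F]_3 := \matrix_(i < 3, j < 3) nth 0 l (3 * i + j).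

Lemma realizes_mk3 (l : seq F) s :
  (forall k, (k < 9)%N -> (nth 0 l k != 0) = nth false s k) -> realizes (mk3 l) (mkpat3 s).
Proof.
move=> H i j; rewrite !mxE; apply: H.
by case: i => [[|[|[|//]]] ?]; case: j => [[|[|[|//]]] ?].
Qed.

Lemma realizes_get N s i j : realizes N (mkpat3 s) -> (N i j != 0) = nth false s (3 * i + j).
Proof. by move=> H; rewrite H mxE. Qed.

Lemma zget (i j : 'I_3) N s : realizes N (mkpat3 s) -> nth false s (3 * i + j) = false -> N i j = 0.
Proof. by move=> H E; apply/eqP; move: (realizes_get i j H); rewrite E => /negbT; rewrite negbK. Qed.

Lemma nzget (i j : 'I_3) N s : realizes N (mkpat3 s) -> nth false s (3 * i + j) = true -> N i j != 0.
Proof. by move=> H E; rewrite (realizes_get i j H) E. Qed.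
End Gen.
Arguments zget {F} i j {N s}.
Arguments nzget {F} i j {N s}.
Definition rep0 : seq bool := [:: false; false; true; false; false; true; true; true; false].
Definition rep1 : seq bool := [:: false; false; true; false; false; true; true; true; true].
Definition rep2 : seq bool := [:: false; false; true; false; true; true; true; true; false].
Definition rep3 : seq bool := [:: false; false; true; false; true; true; true; true; true].
Definition rep4 : seq bool := [:: false; false; true; true; false; false; false; true; false].
Definition rep5 : seq bool := [:: false; false; true; true; false; false; false; true; true].
Definition rep6 : seq bool := [:: false; false; true; true; false; false; true; true; false].
Definition rep7 : seq bool := [:: false; false; true; true; false; false; true; true; true].
Definition rep8 : seq bool := [:: false; false; true; true; false; true; false; true; true].
Definition rep9 : seq bool := [:: false; false; true; true; false; true; true; true; false].
Definition rep10 : seq bool := [:: false; false; true; true; false; true; true; true; true].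
Definition rep11 : seq bool := [:: false; false; true; true; true; false; false; true; true].
Definition rep12 : seq bool := [:: false; false; true; true; true; false; true; true; false].
Definition rep13 : seq bool := [:: false; false; true; true; true; false; true; true; true].
Definition rep14 : seq bool := [:: false; false; true; true; true; true; false; true; true].
Definition rep15 : seq bool := [:: false; false; true; true; true; true; true; true; false].
Definition rep16 : seq bool := [:: false; false; true; true; true; true; true; true; true].
Definition rep17 : seq bool := [:: false; true; true; false; true; true; true; false; true].
Definition rep18 : seq bool := [:: false; true; true; false; true; true; true; true; false].
Definition rep19 : seq bool := [:: false; true; true; false; true; true; true; true; true].
Definition rep20 : seq bool := [:: false; true; true; true; false; true; true; true; false].
Definition rep21 : seq bool := [:: false; true; true; true; false; true; true; true; true].
Definition rep22 : seq bool := [:: false; true; true; true; true; false; true; false; true].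
Definition rep23 : seq bool := [:: false; true; true; true; true; false; true; true; true].
Definition rep24 : seq bool := [:: false; true; true; true; true; true; true; true; true].
Definition rep25 : seq bool := [:: true; false; true; false; true; true; true; true; true].
Definition rep26 : seq bool := [:: true; false; true; true; true; false; false; true; true].
Definition rep27 : seq bool := [:: true; false; true; true; true; false; true; true; true].
Definition rep28 : seq bool := [:: true; false; true; true; true; true; true; true; true].
Definition rep29 : seq bool := [:: true; true; true; true; true; true; true; true; true].
Section Reps.
Variable F : fieldType.
Add Ring Fring2 : (Rth F).

Lemma pn0 : potentially_nilpotent F (mkpat3 rep0).
Proof.
have n1 : (1 : F) != 0 := oner_neq0 F.
apply/PN_iff; exists (mk3 [:: 0; 0; 1; 0; 0; 1; 1; (-1); 0]); split.
  apply: realizes_mk3 => -[|[|[|[|[|[|[|[|[|//]]]]]]]]] _; rewrite /= ?oppr_eq0 ?eqxx ?n1 //.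
by rewrite /tr3 /e3 /det3 !mxE /=; split; [rg|split; rg].
Qed.

Lemma none1 : ~ potentially_nilpotent F (mkpat3 rep1).
Proof.
move/PN_iff => [N [H [Ht [He Hd]]]].
have z00 := zget i0 i0 H erefl.
have z01 := zget i0 i1 H erefl.
have n02 := nzget i0 i2 H erefl.
have z10 := zget i1 i0 H erefl.
have z11 := zget i1 i1 H erefl.
have n12 := nzget i1 i2 H erefl.
have n20 := nzget i2 i0 H erefl.
have n21 := nzget i2 i1 H erefl.
have n22 := nzget i2 i2 H erefl.
have E : tr3 N = ((N i2 i2)) by rewrite /tr3 ?z00 ?z01 ?z10 ?z11; rg.
have NZ := n22.
by move: NZ; rewrite -E Ht eqxx.
Qed.

Lemma none2 : ~ potentially_nilpotent F (mkpat3 rep2).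
Proof.
move/PN_iff => [N [H [Ht [He Hd]]]].
have z00 := zget i0 i0 H erefl.
have z01 := zget i0 i1 H erefl.
have n02 := nzget i0 i2 H erefl.
have z10 := zget i1 i0 H erefl.
have n11 := nzget i1 i1 H erefl.
have n12 := nzget i1 i2 H erefl.
have n20 := nzget i2 i0 H erefl.
have n21 := nzget i2 i1 H erefl.
have z22 := zget i2 i2 H erefl.
have E : tr3 N = ((N i1 i1)) by rewrite /tr3 ?z00 ?z01 ?z10 ?z22; rg.
have NZ := n11.
by move: NZ; rewrite -E Ht eqxx.
Qed.

Lemma none3 : ~ potentially_nilpotent F (mkpat3 rep3).
Proof.
move/PN_iff => [N [H [Ht [He Hd]]]].
have z00 := zget i0 i0 H erefl.
have z01 := zget i0 i1 H erefl.
have n02 := nzget i0 i2 H erefl.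
have z10 := zget i1 i0 H erefl.
have n11 := nzget i1 i1 H erefl.
have n12 := nzget i1 i2 H erefl.
have n20 := nzget i2 i0 H erefl.
have n21 := nzget i2 i1 H erefl.
have n22 := nzget i2 i2 H erefl.
have E : det3 N = - ((N i0 i2) * (N i1 i1) * (N i2 i0)) by rewrite /det3 ?z00 ?z01 ?z10; rg.
have NZ := (mulf_neq0 (mulf_neq0 n02 n11) n20).
by move: NZ; rewrite -oppr_eq0 -E Hd eqxx.
Qed.

Lemma none4 : ~ potentially_nilpotent F (mkpat3 rep4).
Proof.
move/PN_iff => [N [H [Ht [He Hd]]]].
have z00 := zget i0 i0 H erefl.
have z01 := zget i0 i1 H erefl.
have n02 := nzget i0 i2 H erefl.
have n10 := nzget i1 i0 H erefl.
have z11 := zget i1 i1 H erefl.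
have z12 := zget i1 i2 H erefl.
have z20 := zget i2 i0 H erefl.
have n21 := nzget i2 i1 H erefl.
have z22 := zget i2 i2 H erefl.
have E : det3 N = ((N i0 i2) * (N i1 i0) * (N i2 i1)) by rewrite /det3 ?z00 ?z01 ?z11 ?z12 ?z20 ?z22; rg.
have NZ := (mulf_neq0 (mulf_neq0 n02 n10) n21).
by move: NZ; rewrite -E Hd eqxx.
Qed.

Lemma none5 : ~ potentially_nilpotent F (mkpat3 rep5).
Proof.
move/PN_iff => [N [H [Ht [He Hd]]]].
have z00 := zget i0 i0 H erefl.
have z01 := zget i0 i1 H erefl.
have n02 := nzget i0 i2 H erefl.
have n10 := nzget i1 i0 H erefl.
have z11 := zget i1 i1 H erefl.
have z12 := zget i1 i2 H erefl.
have z20 := zget i2 i0 H erefl.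
have n21 := nzget i2 i1 H erefl.
have n22 := nzget i2 i2 H erefl.
have E : tr3 N = ((N i2 i2)) by rewrite /tr3 ?z00 ?z01 ?z11 ?z12 ?z20; rg.
have NZ := n22.
by move: NZ; rewrite -E Ht eqxx.
Qed.

Lemma none6 : ~ potentially_nilpotent F (mkpat3 rep6).
Proof.
move/PN_iff => [N [H [Ht [He Hd]]]].
have z00 := zget i0 i0 H erefl.
have z01 := zget i0 i1 H erefl.
have n02 := nzget i0 i2 H erefl.
have n10 := nzget i1 i0 H erefl.
have z11 := zget i1 i1 H erefl.
have z12 := zget i1 i2 H erefl.
have n20 := nzget i2 i0 H erefl.
have n21 := nzget i2 i1 H erefl.
have z22 := zget i2 i2 H erefl.
have E : e3 N = - ((N i0 i2) * (N i2 i0)) by rewrite /e3 ?z00 ?z01 ?z11 ?z12 ?z22; rg.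
have NZ := (mulf_neq0 n02 n20).
by move: NZ; rewrite -oppr_eq0 -E He eqxx.
Qed.

Lemma none7 : ~ potentially_nilpotent F (mkpat3 rep7).
Proof.
move/PN_iff => [N [H [Ht [He Hd]]]].
have z00 := zget i0 i0 H erefl.
have z01 := zget i0 i1 H erefl.
have n02 := nzget i0 i2 H erefl.
have n10 := nzget i1 i0 H erefl.
have z11 := zget i1 i1 H erefl.
have z12 := zget i1 i2 H erefl.
have n20 := nzget i2 i0 H erefl.
have n21 := nzget i2 i1 H erefl.
have n22 := nzget i2 i2 H erefl.
have E : tr3 N = ((N i2 i2)) by rewrite /tr3 ?z00 ?z01 ?z11 ?z12; rg.
have NZ := n22.
by move: NZ; rewrite -E Ht eqxx.
Qed.

Lemma none8 : ~ potentially_nilpotent F (mkpat3 rep8).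
Proof.
move/PN_iff => [N [H [Ht [He Hd]]]].
have z00 := zget i0 i0 H erefl.
have z01 := zget i0 i1 H erefl.
have n02 := nzget i0 i2 H erefl.
have n10 := nzget i1 i0 H erefl.
have z11 := zget i1 i1 H erefl.
have n12 := nzget i1 i2 H erefl.
have z20 := zget i2 i0 H erefl.
have n21 := nzget i2 i1 H erefl.
have n22 := nzget i2 i2 H erefl.
have E : tr3 N = ((N i2 i2)) by rewrite /tr3 ?z00 ?z01 ?z11 ?z20; rg.
have NZ := n22.
by move: NZ; rewrite -E Ht eqxx.
Qed.

Lemma none9 : ~ potentially_nilpotent F (mkpat3 rep9).
Proof.
move/PN_iff => [N [H [Ht [He Hd]]]].
have z00 := zget i0 i0 H erefl.
have z01 := zget i0 i1 H erefl.
have n02 := nzget i0 i2 H erefl.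
have n10 := nzget i1 i0 H erefl.
have z11 := zget i1 i1 H erefl.
have n12 := nzget i1 i2 H erefl.
have n20 := nzget i2 i0 H erefl.
have n21 := nzget i2 i1 H erefl.
have z22 := zget i2 i2 H erefl.
have E : det3 N = ((N i0 i2) * (N i1 i0) * (N i2 i1)) by rewrite /det3 ?z00 ?z01 ?z11 ?z22; rg.
have NZ := (mulf_neq0 (mulf_neq0 n02 n10) n21).
by move: NZ; rewrite -E Hd eqxx.
Qed.

Lemma none10 : ~ potentially_nilpotent F (mkpat3 rep10).
Proof.
move/PN_iff => [N [H [Ht [He Hd]]]].
have z00 := zget i0 i0 H erefl.
have z01 := zget i0 i1 H erefl.
have n02 := nzget i0 i2 H erefl.
have n10 := nzget i1 i0 H erefl.
have z11 := zget i1 i1 H erefl.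
have n12 := nzget i1 i2 H erefl.
have n20 := nzget i2 i0 H erefl.
have n21 := nzget i2 i1 H erefl.
have n22 := nzget i2 i2 H erefl.
have E : tr3 N = ((N i2 i2)) by rewrite /tr3 ?z00 ?z01 ?z11; rg.
have NZ := n22.
by move: NZ; rewrite -E Ht eqxx.
Qed.

Lemma none11 : ~ potentially_nilpotent F (mkpat3 rep11).
Proof.
move/PN_iff => [N [H [Ht [He Hd]]]].
have z00 := zget i0 i0 H erefl.
have z01 := zget i0 i1 H erefl.
have n02 := nzget i0 i2 H erefl.
have n10 := nzget i1 i0 H erefl.
have n11 := nzget i1 i1 H erefl.
have z12 := zget i1 i2 H erefl.
have z20 := zget i2 i0 H erefl.
have n21 := nzget i2 i1 H erefl.
have n22 := nzget i2 i2 H erefl.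
have E : e3 N = ((N i1 i1) * (N i2 i2)) by rewrite /e3 ?z00 ?z01 ?z12 ?z20; rg.
have NZ := (mulf_neq0 n11 n22).
by move: NZ; rewrite -E He eqxx.
Qed.

Lemma none12 : ~ potentially_nilpotent F (mkpat3 rep12).
Proof.
move/PN_iff => [N [H [Ht [He Hd]]]].
have z00 := zget i0 i0 H erefl.
have z01 := zget i0 i1 H erefl.
have n02 := nzget i0 i2 H erefl.
have n10 := nzget i1 i0 H erefl.
have n11 := nzget i1 i1 H erefl.
have z12 := zget i1 i2 H erefl.
have n20 := nzget i2 i0 H erefl.
have n21 := nzget i2 i1 H erefl.
have z22 := zget i2 i2 H erefl.
have E : tr3 N = ((N i1 i1)) by rewrite /tr3 ?z00 ?z01 ?z12 ?z22; rg.
have NZ := n11.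
by move: NZ; rewrite -E Ht eqxx.
Qed.

Lemma pn13 : potentially_nilpotent F (mkpat3 rep13).
Proof.
have n1 : (1 : F) != 0 := oner_neq0 F.
apply/PN_iff; exists (mk3 [:: 0; 0; 1; 1; (-1); 0; (-1); 1; 1]); split.
  apply: realizes_mk3 => -[|[|[|[|[|[|[|[|[|//]]]]]]]]] _; rewrite /= ?oppr_eq0 ?eqxx ?n1 //.
by rewrite /tr3 /e3 /det3 !mxE /=; split; [rg|split; rg].
Qed.

Lemma none14 : ~ potentially_nilpotent F (mkpat3 rep14).
Proof.
move/PN_iff => [N [H [Ht [He Hd]]]].
have z00 := zget i0 i0 H erefl.
have z01 := zget i0 i1 H erefl.
have n02 := nzget i0 i2 H erefl.
have n10 := nzget i1 i0 H erefl.
have n11 := nzget i1 i1 H erefl.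
have n12 := nzget i1 i2 H erefl.
have z20 := zget i2 i0 H erefl.
have n21 := nzget i2 i1 H erefl.
have n22 := nzget i2 i2 H erefl.
have E : det3 N = ((N i0 i2) * (N i1 i0) * (N i2 i1)) by rewrite /det3 ?z00 ?z01 ?z20; rg.
have NZ := (mulf_neq0 (mulf_neq0 n02 n10) n21).
by move: NZ; rewrite -E Hd eqxx.
Qed.

Lemma none15 : ~ potentially_nilpotent F (mkpat3 rep15).
Proof.
move/PN_iff => [N [H [Ht [He Hd]]]].
have z00 := zget i0 i0 H erefl.
have z01 := zget i0 i1 H erefl.
have n02 := nzget i0 i2 H erefl.
have n10 := nzget i1 i0 H erefl.
have n11 := nzget i1 i1 H erefl.
have n12 := nzget i1 i2 H erefl.
have n20 := nzget i2 i0 H erefl.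
have n21 := nzget i2 i1 H erefl.
have z22 := zget i2 i2 H erefl.
have E : tr3 N = ((N i1 i1)) by rewrite /tr3 ?z00 ?z01 ?z22; rg.
have NZ := n11.
by move: NZ; rewrite -E Ht eqxx.
Qed.

Lemma pn16 (h2 : (1 + 1 : F) != 0) : potentially_nilpotent F (mkpat3 rep16).
Proof.
have n1 : (1 : F) != 0 := oner_neq0 F.
have n4 := mulf_neq0 h2 h2.
apply/PN_iff; exists (mk3 [:: 0; 0; 1; 1; 1; (-(1+1)); 1; 1; (-1)]); split.
  apply: realizes_mk3 => -[|[|[|[|[|[|[|[|[|//]]]]]]]]] _; rewrite /= ?oppr_eq0 ?eqxx ?n1 ?h2 ?n4 //.
by rewrite /tr3 /e3 /det3 !mxE /=; split; [rg|split; rg].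
Qed.

Lemma f2_16 (hF2 : forall x : F, x != 0 -> x = 1) (h2 : (1 + 1 : F) = 0) : ~ potentially_nilpotent F (mkpat3 rep16).
Proof.
move/PN_iff => [N [H [Ht [He Hd]]]].
have z00 := zget i0 i0 H erefl.
have z01 := zget i0 i1 H erefl.
have n02 := nzget i0 i2 H erefl.
have o02 := hF2 _ n02.
have n10 := nzget i1 i0 H erefl.
have o10 := hF2 _ n10.
have n11 := nzget i1 i1 H erefl.
have o11 := hF2 _ n11.
have n12 := nzget i1 i2 H erefl.
have o12 := hF2 _ n12.
have n20 := nzget i2 i0 H erefl.
have o20 := hF2 _ n20.
have n21 := nzget i2 i1 H erefl.
have o21 := hF2 _ n21.
have n22 := nzget i2 i2 H erefl.
have o22 := hF2 _ n22.
have E : e3 N = 1 + (1 + 1) * (-1) by rewrite /e3 ?z00 ?z01 ?o02 ?o10 ?o11 ?o12 ?o20 ?o21 ?o22; rg.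
by move: E; rewrite He h2 mul0r addr0 => /eqP; rewrite eq_sym oner_eq0.
Qed.

Lemma pn17 : potentially_nilpotent F (mkpat3 rep17).
Proof.
have n1 : (1 : F) != 0 := oner_neq0 F.
apply/PN_iff; exists (mk3 [:: 0; 1; 1; 0; 1; 1; (-1); 0; (-1)]); split.
  apply: realizes_mk3 => -[|[|[|[|[|[|[|[|[|//]]]]]]]]] _; rewrite /= ?oppr_eq0 ?eqxx ?n1 //.
by rewrite /tr3 /e3 /det3 !mxE /=; split; [rg|split; rg].
Qed.

Lemma none18 : ~ potentially_nilpotent F (mkpat3 rep18).
Proof.
move/PN_iff => [N [H [Ht [He Hd]]]].
have z00 := zget i0 i0 H erefl.
have n01 := nzget i0 i1 H erefl.
have n02 := nzget i0 i2 H erefl.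
have z10 := zget i1 i0 H erefl.
have n11 := nzget i1 i1 H erefl.
have n12 := nzget i1 i2 H erefl.
have n20 := nzget i2 i0 H erefl.
have n21 := nzget i2 i1 H erefl.
have z22 := zget i2 i2 H erefl.
have E : tr3 N = ((N i1 i1)) by rewrite /tr3 ?z00 ?z10 ?z22; rg.
have NZ := n11.
by move: NZ; rewrite -E Ht eqxx.
Qed.

Lemma pn19 (h2 : (1 + 1 : F) != 0) : potentially_nilpotent F (mkpat3 rep19).
Proof.
have n1 : (1 : F) != 0 := oner_neq0 F.
have n4 := mulf_neq0 h2 h2.
apply/PN_iff; exists (mk3 [:: 0; 1; 1; 0; 1; 1; 1; (-(1+1)); (-1)]); split.
  apply: realizes_mk3 => -[|[|[|[|[|[|[|[|[|//]]]]]]]]] _; rewrite /= ?oppr_eq0 ?eqxx ?n1 ?h2 ?n4 //.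
by rewrite /tr3 /e3 /det3 !mxE /=; split; [rg|split; rg].
Qed.

Lemma f2_19 (hF2 : forall x : F, x != 0 -> x = 1) (h2 : (1 + 1 : F) = 0) : ~ potentially_nilpotent F (mkpat3 rep19).
Proof.
move/PN_iff => [N [H [Ht [He Hd]]]].
have z00 := zget i0 i0 H erefl.
have n01 := nzget i0 i1 H erefl.
have o01 := hF2 _ n01.
have n02 := nzget i0 i2 H erefl.
have o02 := hF2 _ n02.
have z10 := zget i1 i0 H erefl.
have n11 := nzget i1 i1 H erefl.
have o11 := hF2 _ n11.
have n12 := nzget i1 i2 H erefl.
have o12 := hF2 _ n12.
have n20 := nzget i2 i0 H erefl.
have o20 := hF2 _ n20.
have n21 := nzget i2 i1 H erefl.
have o21 := hF2 _ n21.
have n22 := nzget i2 i2 H erefl.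
have o22 := hF2 _ n22.
have E : e3 N = 1 + (1 + 1) * (-1) by rewrite /e3 ?z00 ?z10 ?o01 ?o02 ?o11 ?o12 ?o20 ?o21 ?o22; rg.
by move: E; rewrite He h2 mul0r addr0 => /eqP; rewrite eq_sym oner_eq0.
Qed.

Lemma pn20 (h2 : (1 + 1 : F) != 0) : potentially_nilpotent F (mkpat3 rep20).
Proof.
have n1 : (1 : F) != 0 := oner_neq0 F.
have n4 := mulf_neq0 h2 h2.
apply/PN_iff; exists (mk3 [:: 0; 1; 1; (1+1); 0; 1; (-((1+1)*(1+1))); (1+1); 0]); split.
  apply: realizes_mk3 => -[|[|[|[|[|[|[|[|[|//]]]]]]]]] _; rewrite /= ?oppr_eq0 ?eqxx ?n1 ?h2 ?n4 //.
by rewrite /tr3 /e3 /det3 !mxE /=; split; [rg|split; rg].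
Qed.

Lemma f2_20 (hF2 : forall x : F, x != 0 -> x = 1) (h2 : (1 + 1 : F) = 0) : ~ potentially_nilpotent F (mkpat3 rep20).
Proof.
move/PN_iff => [N [H [Ht [He Hd]]]].
have z00 := zget i0 i0 H erefl.
have n01 := nzget i0 i1 H erefl.
have o01 := hF2 _ n01.
have n02 := nzget i0 i2 H erefl.
have o02 := hF2 _ n02.
have n10 := nzget i1 i0 H erefl.
have o10 := hF2 _ n10.
have z11 := zget i1 i1 H erefl.
have n12 := nzget i1 i2 H erefl.
have o12 := hF2 _ n12.
have n20 := nzget i2 i0 H erefl.
have o20 := hF2 _ n20.
have n21 := nzget i2 i1 H erefl.
have o21 := hF2 _ n21.
have z22 := zget i2 i2 H erefl.
have E : e3 N = 1 + (1 + 1) * (-(1+1)) by rewrite /e3 ?z00 ?z11 ?z22 ?o01 ?o02 ?o10 ?o12 ?o20 ?o21; rg.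
by move: E; rewrite He h2 mul0r addr0 => /eqP; rewrite eq_sym oner_eq0.
Qed.

Lemma none21 : ~ potentially_nilpotent F (mkpat3 rep21).
Proof.
move/PN_iff => [N [H [Ht [He Hd]]]].
have z00 := zget i0 i0 H erefl.
have n01 := nzget i0 i1 H erefl.
have n02 := nzget i0 i2 H erefl.
have n10 := nzget i1 i0 H erefl.
have z11 := zget i1 i1 H erefl.
have n12 := nzget i1 i2 H erefl.
have n20 := nzget i2 i0 H erefl.
have n21 := nzget i2 i1 H erefl.
have n22 := nzget i2 i2 H erefl.
have E : tr3 N = ((N i2 i2)) by rewrite /tr3 ?z00 ?z11; rg.
have NZ := n22.
by move: NZ; rewrite -E Ht eqxx.
Qed.

Lemma pn22 (h2 : (1 + 1 : F) != 0) : potentially_nilpotent F (mkpat3 rep22).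
Proof.
have n1 : (1 : F) != 0 := oner_neq0 F.
have n4 := mulf_neq0 h2 h2.
apply/PN_iff; exists (mk3 [:: 0; 1; 1; (-(1+1)); (1+1); 0; (-(1+1)); 0; (-(1+1))]); split.
  apply: realizes_mk3 => -[|[|[|[|[|[|[|[|[|//]]]]]]]]] _; rewrite /= ?oppr_eq0 ?eqxx ?n1 ?h2 ?n4 //.
by rewrite /tr3 /e3 /det3 !mxE /=; split; [rg|split; rg].
Qed.

Lemma f2_22 (hF2 : forall x : F, x != 0 -> x = 1) (h2 : (1 + 1 : F) = 0) : ~ potentially_nilpotent F (mkpat3 rep22).
Proof.
move/PN_iff => [N [H [Ht [He Hd]]]].
have z00 := zget i0 i0 H erefl.
have n01 := nzget i0 i1 H erefl.
have o01 := hF2 _ n01.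
have n02 := nzget i0 i2 H erefl.
have o02 := hF2 _ n02.
have n10 := nzget i1 i0 H erefl.
have o10 := hF2 _ n10.
have n11 := nzget i1 i1 H erefl.
have o11 := hF2 _ n11.
have z12 := zget i1 i2 H erefl.
have n20 := nzget i2 i0 H erefl.
have o20 := hF2 _ n20.
have z21 := zget i2 i1 H erefl.
have n22 := nzget i2 i2 H erefl.
have o22 := hF2 _ n22.
have E : e3 N = 1 + (1 + 1) * (-1) by rewrite /e3 ?z00 ?z12 ?z21 ?o01 ?o02 ?o10 ?o11 ?o20 ?o22; rg.
by move: E; rewrite He h2 mul0r addr0 => /eqP; rewrite eq_sym oner_eq0.
Qed.

Lemma pn23 (h2 : (1 + 1 : F) != 0) (h3 : (1 + 1 + 1 : F) != 0) : potentially_nilpotent F (mkpat3 rep23).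
Proof.
have n1 : (1 : F) != 0 := oner_neq0 F.
have n4 := mulf_neq0 h2 h2.
have n6 := mulf_neq0 h2 h3.
apply/PN_iff; exists (mk3 [:: 0; 1; 1; 1; (-1); 0; (-(1+1)); (1+1+1); 1]); split.
  apply: realizes_mk3 => -[|[|[|[|[|[|[|[|[|//]]]]]]]]] _; rewrite /= ?oppr_eq0 ?eqxx ?n1 ?h2 ?h3 ?n4 ?n6 //.
by rewrite /tr3 /e3 /det3 !mxE /=; split; [rg|split; rg].
Qed.

Lemma f2_23 (hF2 : forall x : F, x != 0 -> x = 1) (h2 : (1 + 1 : F) = 0) : ~ potentially_nilpotent F (mkpat3 rep23).
Proof.
move/PN_iff => [N [H [Ht [He Hd]]]].
have z00 := zget i0 i0 H erefl.
have n01 := nzget i0 i1 H erefl.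
have o01 := hF2 _ n01.
have n02 := nzget i0 i2 H erefl.
have o02 := hF2 _ n02.
have n10 := nzget i1 i0 H erefl.
have o10 := hF2 _ n10.
have n11 := nzget i1 i1 H erefl.
have o11 := hF2 _ n11.
have z12 := zget i1 i2 H erefl.
have n20 := nzget i2 i0 H erefl.
have o20 := hF2 _ n20.
have n21 := nzget i2 i1 H erefl.
have o21 := hF2 _ n21.
have n22 := nzget i2 i2 H erefl.
have o22 := hF2 _ n22.
have E : e3 N = 1 + (1 + 1) * (-1) by rewrite /e3 ?z00 ?z12 ?o01 ?o02 ?o10 ?o11 ?o20 ?o21 ?o22; rg.
by move: E; rewrite He h2 mul0r addr0 => /eqP; rewrite eq_sym oner_eq0.
Qed.

Lemma pn24 : potentially_nilpotent F (mkpat3 rep24).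
Proof.
have n1 : (1 : F) != 0 := oner_neq0 F.
apply/PN_iff; exists (mk3 [:: 0; 1; 1; 1; 1; 1; (-1); (-1); (-1)]); split.
  apply: realizes_mk3 => -[|[|[|[|[|[|[|[|[|//]]]]]]]]] _; rewrite /= ?oppr_eq0 ?eqxx ?n1 //.
by rewrite /tr3 /e3 /det3 !mxE /=; split; [rg|split; rg].
Qed.

Lemma pn25 (h2 : (1 + 1 : F) != 0) (h3 : (1 + 1 + 1 : F) != 0) : potentially_nilpotent F (mkpat3 rep25).
Proof.
have n1 : (1 : F) != 0 := oner_neq0 F.
have n4 := mulf_neq0 h2 h2.
have n6 := mulf_neq0 h2 h3.
apply/PN_iff; exists (mk3 [:: 1; 0; 1; 0; (1+1); (1+1); 1; (-((1+1)*(1+1))); (-(1+1+1))]); split.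
  apply: realizes_mk3 => -[|[|[|[|[|[|[|[|[|//]]]]]]]]] _; rewrite /= ?oppr_eq0 ?eqxx ?n1 ?h2 ?h3 ?n4 ?n6 //.
by rewrite /tr3 /e3 /det3 !mxE /=; split; [rg|split; rg].
Qed.

Lemma f2_25 (hF2 : forall x : F, x != 0 -> x = 1) (h2 : (1 + 1 : F) = 0) : ~ potentially_nilpotent F (mkpat3 rep25).
Proof.
move/PN_iff => [N [H [Ht [He Hd]]]].
have n00 := nzget i0 i0 H erefl.
have o00 := hF2 _ n00.
have z01 := zget i0 i1 H erefl.
have n02 := nzget i0 i2 H erefl.
have o02 := hF2 _ n02.
have z10 := zget i1 i0 H erefl.
have n11 := nzget i1 i1 H erefl.
have o11 := hF2 _ n11.
have n12 := nzget i1 i2 H erefl.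
have o12 := hF2 _ n12.
have n20 := nzget i2 i0 H erefl.
have o20 := hF2 _ n20.
have n21 := nzget i2 i1 H erefl.
have o21 := hF2 _ n21.
have n22 := nzget i2 i2 H erefl.
have o22 := hF2 _ n22.
have E : tr3 N = 1 + (1 + 1) * 1 by rewrite /tr3 ?z01 ?z10 ?o00 ?o02 ?o11 ?o12 ?o20 ?o21 ?o22; rg.
by move: E; rewrite Ht h2 mul0r addr0 => /eqP; rewrite eq_sym oner_eq0.
Qed.

Lemma pn27 (h2 : (1 + 1 : F) != 0) (h3 : (1 + 1 + 1 : F) != 0) : potentially_nilpotent F (mkpat3 rep27).
Proof.
have n1 : (1 : F) != 0 := oner_neq0 F.
have n4 := mulf_neq0 h2 h2.
have n6 := mulf_neq0 h2 h3.
apply/PN_iff; exists (mk3 [:: 1; 0; (-1); 1; 1; 0; (1+1+1); 1; (-(1+1))]); split.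
  apply: realizes_mk3 => -[|[|[|[|[|[|[|[|[|//]]]]]]]]] _; rewrite /= ?oppr_eq0 ?eqxx ?n1 ?h2 ?h3 ?n4 ?n6 //.
by rewrite /tr3 /e3 /det3 !mxE /=; split; [rg|split; rg].
Qed.

Lemma f2_27 (hF2 : forall x : F, x != 0 -> x = 1) (h2 : (1 + 1 : F) = 0) : ~ potentially_nilpotent F (mkpat3 rep27).
Proof.
move/PN_iff => [N [H [Ht [He Hd]]]].
have n00 := nzget i0 i0 H erefl.
have o00 := hF2 _ n00.
have z01 := zget i0 i1 H erefl.
have n02 := nzget i0 i2 H erefl.
have o02 := hF2 _ n02.
have n10 := nzget i1 i0 H erefl.
have o10 := hF2 _ n10.
have n11 := nzget i1 i1 H erefl.
have o11 := hF2 _ n11.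
have z12 := zget i1 i2 H erefl.
have n20 := nzget i2 i0 H erefl.
have o20 := hF2 _ n20.
have n21 := nzget i2 i1 H erefl.
have o21 := hF2 _ n21.
have n22 := nzget i2 i2 H erefl.
have o22 := hF2 _ n22.
have E : tr3 N = 1 + (1 + 1) * 1 by rewrite /tr3 ?z01 ?z12 ?o00 ?o02 ?o10 ?o11 ?o20 ?o21 ?o22; rg.
by move: E; rewrite Ht h2 mul0r addr0 => /eqP; rewrite eq_sym oner_eq0.
Qed.

Lemma pn28 (h2 : (1 + 1 : F) != 0) : potentially_nilpotent F (mkpat3 rep28).
Proof.
have n1 : (1 : F) != 0 := oner_neq0 F.
have n4 := mulf_neq0 h2 h2.
apply/PN_iff; exists (mk3 [:: 1; 0; 1; 1; 1; ((1+1)*(1+1)); 1; (-1); (-(1+1))]); split.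
  apply: realizes_mk3 => -[|[|[|[|[|[|[|[|[|//]]]]]]]]] _; rewrite /= ?oppr_eq0 ?eqxx ?n1 ?h2 ?n4 //.
by rewrite /tr3 /e3 /det3 !mxE /=; split; [rg|split; rg].
Qed.

Lemma f2_28 (hF2 : forall x : F, x != 0 -> x = 1) (h2 : (1 + 1 : F) = 0) : ~ potentially_nilpotent F (mkpat3 rep28).
Proof.
move/PN_iff => [N [H [Ht [He Hd]]]].
have n00 := nzget i0 i0 H erefl.
have o00 := hF2 _ n00.
have z01 := zget i0 i1 H erefl.
have n02 := nzget i0 i2 H erefl.
have o02 := hF2 _ n02.
have n10 := nzget i1 i0 H erefl.
have o10 := hF2 _ n10.
have n11 := nzget i1 i1 H erefl.
have o11 := hF2 _ n11.
have n12 := nzget i1 i2 H erefl.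
have o12 := hF2 _ n12.
have n20 := nzget i2 i0 H erefl.
have o20 := hF2 _ n20.
have n21 := nzget i2 i1 H erefl.
have o21 := hF2 _ n21.
have n22 := nzget i2 i2 H erefl.
have o22 := hF2 _ n22.
have E : tr3 N = 1 + (1 + 1) * 1 by rewrite /tr3 ?z01 ?o00 ?o02 ?o10 ?o11 ?o12 ?o20 ?o21 ?o22; rg.
by move: E; rewrite Ht h2 mul0r addr0 => /eqP; rewrite eq_sym oner_eq0.
Qed.

Lemma pn29 (h2 : (1 + 1 : F) != 0) : potentially_nilpotent F (mkpat3 rep29).
Proof.
have n1 : (1 : F) != 0 := oner_neq0 F.
have n4 := mulf_neq0 h2 h2.
apply/PN_iff; exists (mk3 [:: 1; 1; 1; 1; 1; 1; (-(1+1)); (-(1+1)); (-(1+1))]); split.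
  apply: realizes_mk3 => -[|[|[|[|[|[|[|[|[|//]]]]]]]]] _; rewrite /= ?oppr_eq0 ?eqxx ?n1 ?h2 ?n4 //.
by rewrite /tr3 /e3 /det3 !mxE /=; split; [rg|split; rg].
Qed.

Lemma f2_29 (hF2 : forall x : F, x != 0 -> x = 1) (h2 : (1 + 1 : F) = 0) : ~ potentially_nilpotent F (mkpat3 rep29).
Proof.
move/PN_iff => [N [H [Ht [He Hd]]]].
have n00 := nzget i0 i0 H erefl.
have o00 := hF2 _ n00.
have n01 := nzget i0 i1 H erefl.
have o01 := hF2 _ n01.
have n02 := nzget i0 i2 H erefl.
have o02 := hF2 _ n02.
have n10 := nzget i1 i0 H erefl.
have o10 := hF2 _ n10.
have n11 := nzget i1 i1 H erefl.
have o11 := hF2 _ n11.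
have n12 := nzget i1 i2 H erefl.
have o12 := hF2 _ n12.
have n20 := nzget i2 i0 H erefl.
have o20 := hF2 _ n20.
have n21 := nzget i2 i1 H erefl.
have o21 := hF2 _ n21.
have n22 := nzget i2 i2 H erefl.
have o22 := hF2 _ n22.
have E : tr3 N = 1 + (1 + 1) * 1 by rewrite /tr3  ?o00 ?o01 ?o02 ?o10 ?o11 ?o12 ?o20 ?o21 ?o22; rg.
by move: E; rewrite Ht h2 mul0r addr0 => /eqP; rewrite eq_sym oner_eq0.
Qed.

End Reps.
Section Case4.
Variable F : fieldType.
Add Ring Fring3 : (Rth F).
Add Ring Pring3 : (@Rth (poly_polynomial__canonical__GRing_ComNzRing (GRing_Field__to__GRing_ComNzRing F))).
Let paddE (x y : {poly F}) : x + y = pl x y := addE x y.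
Let pmulE (x y : {poly F}) : x * y = ml x y := mulE x y.
Let poppE (x : {poly F}) : - x = ng x := oppE x.
Let pzeroE := zeroE (poly_polynomial__canonical__GRing_ComNzRing (GRing_Field__to__GRing_ComNzRing F)).
Let poneE := oneE (poly_polynomial__canonical__GRing_ComNzRing (GRing_Field__to__GRing_ComNzRing F)).
Let pringify := @ringify (poly_polynomial__canonical__GRing_ComNzRing (GRing_Field__to__GRing_ComNzRing F)).
Definition XP : {poly F} := 'X.
Let pXE : 'X = XP := erefl.
Ltac rgP := apply: pringify; rewrite ?exprS ?expr0 ?pXE ?paddE ?pmulE ?poppE ?pzeroE ?poneE; ring.

Lemma tst1 (a : F) : 'X * a%:P = a%:P * 'X :> {poly F}.
Proof. rgP. Qed.
Lemma tst2 : 'X^2 = 'X * 'X :> {poly F}.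
Proof. rgP. Qed.
Lemma tst3 (x : {poly F}) : x - x = 0.
Proof. rgP. Qed.
Lemma expand3 (a b c : F) : ('X - a%:P) * ('X - b%:P) * ('X - c%:P) =
  'X^3 - (a + b + c)%:P * 'X^2 + (a * b + a * c + b * c)%:P * 'X - (a * b * c)%:P :> {poly F}.
Proof. rewrite !polyCD !polyCM. rgP. Qed.

Lemma coefs3 (a b c : F) : ('X^3 - 1 : {poly F}) = ('X - a%:P) * ('X - b%:P) * ('X - c%:P) ->
  a + b + c = 0 /\ a * b + a * c + b * c = 0 /\ a * b * c = 1.
Proof.
rewrite expand3 => H.
have C2 := congr1 (fun q : {poly F} => q`_2) H.
have C1 := congr1 (fun q : {poly F} => q`_1) H.
have C0 := congr1 (fun q : {poly F} => q`_0) H.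
move: C2 C1 C0; rewrite /= !coefE /= => C2 C1 C0.
split; [|split].
- transitivity (- (0 - (a+b+c)*1 + (a*b+a*c+b*c)*0 - 0)); first rg.
  by rewrite -C2 subrr oppr0.
- transitivity (0 - (a+b+c)*0 + (a*b+a*c+b*c)*1 - 0); first rg.
  by rewrite -C1 subrr.
- transitivity (- (0 - (a+b+c)*0 + (a*b+a*c+b*c)*0 - a*b*c)); first rg.
  by rewrite -C0 sub0r opprK.
Qed.

Lemma pn26 : potentially_nilpotent F (mkpat3 rep26) <-> cube_unity_splits F.
Proof.
split.
- move/PN_iff => [N [H [Ht [He Hd]]]].
  have z01 := zget i0 i1 H erefl. have z12 := zget i1 i2 H erefl.
  have z20 := zget i2 i0 H erefl. have n00 := nzget i0 i0 H erefl.
  set u := (N i0 i0)^-1.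
  have Hu : N i0 i0 * u = 1 by rewrite mulfV.
  have B : N i1 i1 * u * (N i2 i2 * u) = 1.
    have X : N i1 i1 * u * (N i2 i2 * u) = 1 + (e3 N - N i0 i0 * tr3 N) * (u * u)
      + (N i0 i0 * u - 1) * (N i0 i0 * u + 1) by rewrite /e3 /tr3 z01 z12 z20; rg.
    by rewrite X He Ht Hu !mulr0 !subrr !mul0r !addr0.
  exists 1, (N i1 i1 * u), (N i2 i2 * u).
  rewrite expand3.
  have A1 : 1 + N i1 i1 * u + N i2 i2 * u = 0.
    have X : 1 + N i1 i1 * u + N i2 i2 * u = tr3 N * u + (1 - N i0 i0 * u) by rewrite /tr3; rg.
    by rewrite X Ht Hu mul0r subrr addr0.
  have A2 : 1 * (N i1 i1 * u) + 1 * (N i2 i2 * u) + N i1 i1 * u * (N i2 i2 * u) = 0.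
    have X : 1 * (N i1 i1 * u) + 1 * (N i2 i2 * u) + N i1 i1 * u * (N i2 i2 * u)
      = tr3 N * u - N i0 i0 * u + N i1 i1 * u * (N i2 i2 * u) by rewrite /tr3; rg.
    by rewrite X Ht Hu B mul0r sub0r addNr.
  have A3 : 1 * (N i1 i1 * u) * (N i2 i2 * u) = 1 by rewrite mul1r B.
  by rewrite A1 A2 A3 polyC0 polyC1 !mul0r subr0 addr0.
- move=> [a [b [c H]]]; have [S1 [S2 S3]] := coefs3 H.
  have na : a != 0 by apply/eqP => a0; move: S3; rewrite a0 !mul0r => /eqP; rewrite eq_sym oner_eq0.
  have nb : b != 0 by apply/eqP => a0; move: S3; rewrite a0 mulr0 mul0r => /eqP; rewrite eq_sym oner_eq0.
  have nc : c != 0 by apply/eqP => a0; move: S3; rewrite a0 mulr0 => /eqP; rewrite eq_sym oner_eq0.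
  have n1 : (1:F) != 0 := oner_neq0 F.
  apply/PN_iff; exists (mk3 [:: a; 0; 1; 1; b; 0; 0; -1; c]); split.
    apply: realizes_mk3 => -[|[|[|[|[|[|[|[|[|//]]]]]]]]] _; rewrite /= ?oppr_eq0 ?eqxx ?n1 ?na ?nb ?nc //.
  rewrite /tr3 /e3 /det3 !mxE /=; split; [|split].
  + by transitivity (a + b + c); [rg|exact S1].
  + by transitivity (a * b + a * c + b * c); [rg|exact S2].
  + by transitivity (a * b * c - 1); [rg|rewrite S3 subrr].
Qed.

Lemma f3_23 (hF3 : forall x : F, x != 0 -> x = 1 \/ x = -1) : ~ potentially_nilpotent F (mkpat3 rep23).
Proof.
move/PN_iff => [N [H [Ht [He Hd]]]].
have z00 := zget i0 i0 H erefl. have z12 := zget i1 i2 H erefl.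
have n01 := nzget i0 i1 H erefl. have n10 := nzget i1 i0 H erefl.
have n02 := nzget i0 i2 H erefl. have n20 := nzget i2 i0 H erefl.
have n11 := nzget i1 i1 H erefl. have n21 := nzget i2 i1 H erefl.
have Ea : N i2 i2 = - N i1 i1 + tr3 N by apply/esym; rewrite /tr3 z00; rg.
rewrite Ht addr0 in Ea.
have aa : N i1 i1 * N i1 i1 = 1 by case: (hF3 _ n11) => ->; rg.
have S : N i0 i1 * N i1 i0 + N i0 i2 * N i2 i0 + 1 = 0.
  have X : N i0 i1 * N i1 i0 + N i0 i2 * N i2 i0 + 1 = - e3 N + (1 - N i1 i1 * N i1 i1)
    by rewrite /e3 z00 z12 Ea; rg.
  by rewrite X He aa oppr0 subrr addr0.
have D : det3 N = N i1 i1 * (N i0 i1 * N i1 i0) - N i1 i1 * (N i0 i2 * N i2 i0)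
  + N i0 i2 * N i1 i0 * N i2 i1 by rewrite /det3 z00 z12 Ea; rg.
have nC : N i0 i2 * N i1 i0 * N i2 i1 != 0 := mulf_neq0 (mulf_neq0 n02 n10) n21.
case: (hF3 _ (mulf_neq0 n01 n10)) => t1; case: (hF3 _ (mulf_neq0 n02 n20)) => t2;
  rewrite ?t1 ?t2 in S D.
- have : N i0 i2 * N i1 i0 * N i2 i1 = det3 N by rewrite D; rg.
  by rewrite Hd => E; rewrite E eqxx in nC.
- have : (1:F) = 0 by rewrite -S; rg.
  by move/eqP; rewrite oner_eq0.
- have : (1:F) = 0 by rewrite -S; rg.
  by move/eqP; rewrite oner_eq0.
- have : (-1:F) = 0 by rewrite -S; rg.
  by move/eqP; rewrite oppr_eq0 oner_eq0.
Qed.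

Lemma f3_25 (hF3 : forall x : F, x != 0 -> x = 1 \/ x = -1) : ~ potentially_nilpotent F (mkpat3 rep25).
Proof.
move/PN_iff => [N [H [Ht [He Hd]]]].
have z01 := zget i0 i1 H erefl. have z10 := zget i1 i0 H erefl.
have n00 := nzget i0 i0 H erefl. have n11 := nzget i1 i1 H erefl.
have n22 := nzget i2 i2 H erefl.
have Ea : N i2 i2 = - (N i0 i0 + N i1 i1) + tr3 N by apply/esym; rewrite /tr3; rg.
rewrite Ht addr0 in Ea.
have E2 : e3 N = N i0 i0 * N i1 i1 - (N i0 i0 + N i1 i1) * (N i0 i0 + N i1 i1)
  - N i0 i2 * N i2 i0 - N i1 i2 * N i2 i1 by rewrite /e3 z01 z10 Ea; rg.
have D : det3 N = - (N i0 i0 * N i1 i1 * (N i0 i0 + N i1 i1)) - N i0 i0 * (N i1 i2 * N i2 i1)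
  - N i1 i1 * (N i0 i2 * N i2 i0) by rewrite /det3 z01 z10 Ea; rg.
case: (hF3 _ n00) => a0; case: (hF3 _ n11) => a1.
- have : (1:F) = det3 N - e3 N by rewrite D E2 a0 a1; rg.
  by rewrite Hd He subrr => /eqP; rewrite oner_eq0.
- by move: n22; rewrite Ea a0 a1 (_ : - (1 + -1) = 0 :> F) ?eqxx //; rg.
- by move: n22; rewrite Ea a0 a1 (_ : - (-1 + 1) = 0 :> F) ?eqxx //; rg.
- have : (-1:F) = det3 N + e3 N by rewrite D E2 a0 a1; rg.
  by rewrite Hd He addr0 => /eqP; rewrite oppr_eq0 oner_eq0.
Qed.

Lemma f3_27 (hF3 : forall x : F, x != 0 -> x = 1 \/ x = -1) (h3 : (1 + 1 + 1 : F) = 0) :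
  ~ potentially_nilpotent F (mkpat3 rep27).
Proof.
move/PN_iff => [N [H [Ht [He Hd]]]].
have z01 := zget i0 i1 H erefl. have z12 := zget i1 i2 H erefl.
have n00 := nzget i0 i0 H erefl. have n11 := nzget i1 i1 H erefl.
have n22 := nzget i2 i2 H erefl. have n02 := nzget i0 i2 H erefl.
have n20 := nzget i2 i0 H erefl.
have Ea : N i2 i2 = - (N i0 i0 + N i1 i1) + tr3 N by apply/esym; rewrite /tr3; rg.
rewrite Ht addr0 in Ea.
have E2 : e3 N = N i0 i0 * N i1 i1 - (N i0 i0 + N i1 i1) * (N i0 i0 + N i1 i1)
  - N i0 i2 * N i2 i0 by rewrite /e3 z01 z12 Ea; rg.
case: (hF3 _ n00) => a0; case: (hF3 _ n11) => a1.
- have : N i0 i2 * N i2 i0 = - (1 + 1 + 1) - e3 N by rewrite E2 a0 a1; rg.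
  by rewrite He h3 oppr0 addr0 => E; move: (mulf_neq0 n02 n20); rewrite E eqxx.
- by move: n22; rewrite Ea a0 a1 (_ : - (1 + -1) = 0 :> F) ?eqxx //; rg.
- by move: n22; rewrite Ea a0 a1 (_ : - (-1 + 1) = 0 :> F) ?eqxx //; rg.
- have : N i0 i2 * N i2 i0 = - (1 + 1 + 1) - e3 N by rewrite E2 a0 a1; rg.
  by rewrite He h3 oppr0 addr0 => E; move: (mulf_neq0 n02 n20); rewrite E eqxx.
Qed.
End Case4.

Section Comb.

Lemma conj_pow (F : fieldType) (M P Q : 'M[F]_3) k : Q * P = 1 ->
  (P * M * Q) ^+ k.+1 = P * M ^+ k.+1 * Q.
Proof.
move=> QP; elim: k => [|k IH]; first by rewrite !expr1.
transitivity (P * M ^+ k.+1 * (Q * P) * M * Q); first by rewrite exprSr IH !mulrA.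
by rewrite QP mulr1 -(mulrA P) -exprSr.
Qed.

Lemma PN_equiv (F : fieldType) (P Q : 'M[bool]_3) :
  pat_equiv P Q -> potentially_nilpotent F P -> potentially_nilpotent F Q.
Proof.
move=> [s Hs] [N [R [k Hk]]].
exists (perm_mx s^-1 * N * perm_mx s); split.
  move=> i j; rewrite -!mulmxE -row_permE.
  rewrite (_ : row_perm s^-1 N *m perm_mx s = col_perm s^-1 (row_perm s^-1 N)); last by rewrite col_permE invgK.
  by rewrite !mxE R Hs !permKV.
exists k.+1; rewrite conj_pow; last by rewrite -mulmxE -perm_mxM mulgV perm_mx1.
by rewrite exprSr Hk mul0r mulr0 mul0r.
Qed.

Lemma pat_equiv_sym (P Q : 'M[bool]_3) : pat_equiv P Q -> pat_equiv Q P.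
Proof. by move=> [s Hs]; exists (s^-1)%g => i j; rewrite Hs !permKV. Qed.

Definition pairs9 : seq ('I_3 * 'I_3) :=
  [:: (i0,i0); (i0,i1); (i0,i2); (i1,i0); (i1,i1); (i1,i2); (i2,i0); (i2,i1); (i2,i2)].

Lemma in_pairs9 (i j : 'I_3) : (i, j) \in pairs9.
Proof. by have [->|[->|->]] := ord3 i; have [->|[->|->]] := ord3 j. Qed.

Definition perms6 : seq (seq 'I_3) :=
  [:: [:: i0; i1; i2]; [:: i0; i2; i1]; [:: i1; i0; i2]; [:: i1; i2; i0]; [:: i2; i0; i1]; [:: i2; i1; i0]].

Definition equivb (s t : seq bool) : bool :=
  has (fun f => all (fun ij : 'I_3 * 'I_3 => nth false s (3 * ij.1 + ij.2) ==
          nth false t (3 * nth i0 f ij.1 + nth i0 f ij.2)) pairs9) perms6.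

Lemma fperm_inj (f : seq 'I_3) : uniq f && (size f == 3%N) -> injective (fun i : 'I_3 => nth i0 f i).
Proof.
move=> /andP [Hu /eqP Hs] i j /eqP; rewrite nth_uniq ?Hs //.
by move/eqP/val_inj.
Qed.

Lemma equiv_ok (s t : seq bool) : pat_equiv (mkpat3 s) (mkpat3 t) <-> equivb s t.
Proof.
split.
- move=> [σ Hσ]; apply/hasP; exists [:: σ i0; σ i1; σ i2].
    have inj := @perm_inj _ σ.
    have d01 : σ i0 != σ i1 by apply/eqP => /inj.
    have d02 : σ i0 != σ i2 by apply/eqP => /inj.
    have d12 : σ i1 != σ i2 by apply/eqP => /inj.
    move: d01 d02 d12.
    by have [->|[->|->]] := ord3 (σ i0); have [->|[->|->]] := ord3 (σ i1);
       have [->|[->|->]] := ord3 (σ i2).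
  apply/allP => -[i j] _ /=.
  have E : forall k : 'I_3, nth i0 [:: σ i0; σ i1; σ i2] k = σ k.
    by move=> k; have [->|[->|->]] := ord3 k.
  by rewrite !E; move: (Hσ i j); rewrite !mxE => ->.
- move/hasP => [f Hf /allP Ha].
  have Hu : uniq f && (size f == 3%N).
    have Hall : all (fun f => uniq f && (size f == 3%N)) perms6 by [].
    exact: (allP Hall f Hf).
  exists (perm (fperm_inj Hu)) => i j.
  by rewrite !mxE !permE; apply/eqP; exact: (Ha _ (in_pairs9 i j)).
Qed.

End Comb.

Section Fp.
Variable p : nat.
Hypothesis Hp : prime p.

Lemma three_nat (R : nzRingType) : (1 + 1 + 1 : R) = 3%:R.
Proof. by rewrite !mulrSr mulr0n add0r. Qed.
Lemma two_nat (R : nzRingType) : (1 + 1 : R) = 2%:R.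
Proof. by rewrite !mulrSr mulr0n add0r. Qed.

Lemma Fp2 : p != 2 -> (1 + 1 : 'F_p) != 0.
Proof.
move=> p2; rewrite two_nat -(dvdn_pcharf (pchar_Fp Hp)) dvdn_prime2 //.
Qed.

Lemma Fp3 : p != 3 -> (1 + 1 + 1 : 'F_p) != 0.
Proof.
move=> p3; rewrite three_nat -(dvdn_pcharf (pchar_Fp Hp)) dvdn_prime2 //.
Qed.
End Fp.

Lemma F2_one (x : 'F_2) : x != 0 -> x = 1.
Proof.
move=> nx; have E := expf_card x; rewrite card_Fp // in E.
by apply: (mulfI nx); rewrite mulr1 -expr2 E.
Qed.

Lemma F2_two : (1 + 1 : 'F_2) = 0.
Proof. by rewrite two_nat pchar_Fp_0. Qed.

Lemma F3_three : (1 + 1 + 1 : 'F_3) = 0.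
Proof. by rewrite three_nat pchar_Fp_0. Qed.

Lemma F3_pm (x : 'F_3) : x != 0 -> x = 1 \/ x = -1.
Proof.
move=> nx; have E := expf_card x; rewrite card_Fp // in E.
have xx : x * x = 1 by apply: (mulfI nx); rewrite mulr1 mulrA -expr2 -exprSr E.
have : (x - 1) * (x + 1) == 0 by rewrite mulrDr mulrBl xx mulr1 mul1r addrA subrK subrr.
rewrite mulf_eq0 => /orP [|]; first by rewrite subr_eq0 => /eqP; left.
by rewrite addr_eq0 => /eqP; right.
Qed.

Definition condp (c p : nat) : Prop :=
  match c with
  | 1 => True
  | 2 => (p != 2)%N
  | 3 => (p \notin [:: 2%N; 3%N])%N
  | 4 => cube_unity_splits 'F_p
  | _ => False
  end.

Section Ok.
Variables (p : nat) (Hp : prime p) (s : seq bool).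

Lemma ok_none : (forall F : fieldType, ~ potentially_nilpotent F (mkpat3 s)) ->
  (potentially_nilpotent 'F_p (mkpat3 s) <-> condp 0 p).
Proof. by move=> H; split => // /H. Qed.

Lemma ok_1 : (forall F : fieldType, potentially_nilpotent F (mkpat3 s)) ->
  (potentially_nilpotent 'F_p (mkpat3 s) <-> condp 1 p).
Proof. by move=> H; split => // _; apply: H. Qed.

Lemma ok_2 : (forall F : fieldType, (1 + 1 : F) != 0 -> potentially_nilpotent F (mkpat3 s)) ->
  (forall F : fieldType, (forall x : F, x != 0 -> x = 1) -> (1 + 1 : F) = 0 ->
     ~ potentially_nilpotent F (mkpat3 s)) ->
  (potentially_nilpotent 'F_p (mkpat3 s) <-> condp 2 p).
Proof.
move=> H1 H2; split => /=.
  by move=> HP; apply/eqP => p2; subst p; exact: (H2 _ F2_one F2_two HP).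
by move=> p2; apply: H1; apply: Fp2.
Qed.

Lemma ok_3 : (forall F : fieldType, (1 + 1 : F) != 0 -> (1 + 1 + 1 : F) != 0 ->
     potentially_nilpotent F (mkpat3 s)) ->
  (forall F : fieldType, (forall x : F, x != 0 -> x = 1) -> (1 + 1 : F) = 0 ->
     ~ potentially_nilpotent F (mkpat3 s)) ->
  (forall F : fieldType, (forall x : F, x != 0 -> x = 1 \/ x = -1) -> (1 + 1 + 1 : F) = 0 ->
     ~ potentially_nilpotent F (mkpat3 s)) ->
  (potentially_nilpotent 'F_p (mkpat3 s) <-> condp 3 p).
Proof.
move=> H1 H2 H3; split => /=.
  move=> HP; rewrite !inE; apply/norP; split; apply/eqP => pe; subst p.
    exact: (H2 _ F2_one F2_two HP).
  exact: (H3 _ F3_pm F3_three HP).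
rewrite !inE => /norP [p2 p3]; apply: H1; [exact: Fp2|exact: Fp3].
Qed.
End Ok.
Definition reps : seq (seq bool) := [:: rep0; rep1; rep2; rep3; rep4; rep5; rep6; rep7; rep8; rep9; rep10; rep11; rep12; rep13; rep14; rep15; rep16; rep17; rep18; rep19; rep20; rep21; rep22; rep23; rep24; rep25; rep26; rep27; rep28; rep29].
Definition codes : seq nat := [:: 1; 0; 0; 0; 0; 0; 0; 0; 0; 0; 0; 0; 0; 1; 0; 0; 2; 1; 0; 2; 2; 0; 2; 3; 1; 3; 4; 3; 2; 2].

Lemma rep_ok p (Hp : prime p) r : (r < 30)%N ->
  (potentially_nilpotent 'F_p (mkpat3 (nth [::] reps r)) <-> condp (nth 0%N codes r) p).
Proof.
case: r => [_|r]; first by apply: ok_1; exact: pn0.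
case: r => [_|r]; first by apply: ok_none; exact: none1.
case: r => [_|r]; first by apply: ok_none; exact: none2.
case: r => [_|r]; first by apply: ok_none; exact: none3.
case: r => [_|r]; first by apply: ok_none; exact: none4.
case: r => [_|r]; first by apply: ok_none; exact: none5.
case: r => [_|r]; first by apply: ok_none; exact: none6.
case: r => [_|r]; first by apply: ok_none; exact: none7.
case: r => [_|r]; first by apply: ok_none; exact: none8.
case: r => [_|r]; first by apply: ok_none; exact: none9.
case: r => [_|r]; first by apply: ok_none; exact: none10.
case: r => [_|r]; first by apply: ok_none; exact: none11.
case: r => [_|r]; first by apply: ok_none; exact: none12.
case: r => [_|r]; first by apply: ok_1; exact: pn13.
case: r => [_|r]; first by apply: ok_none; exact: none14.
case: r => [_|r]; first by apply: ok_none; exact: none15.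
case: r => [_|r]; first by apply: (ok_2 Hp); [exact: pn16 | exact: f2_16].
case: r => [_|r]; first by apply: ok_1; exact: pn17.
case: r => [_|r]; first by apply: ok_none; exact: none18.
case: r => [_|r]; first by apply: (ok_2 Hp); [exact: pn19 | exact: f2_19].
case: r => [_|r]; first by apply: (ok_2 Hp); [exact: pn20 | exact: f2_20].
case: r => [_|r]; first by apply: ok_none; exact: none21.
case: r => [_|r]; first by apply: (ok_2 Hp); [exact: pn22 | exact: f2_22].
case: r => [_|r]; first by apply: (ok_3 Hp); [exact: pn23 | exact: f2_23 | by move=> F h _; exact: f3_23 h].
case: r => [_|r]; first by apply: ok_1; exact: pn24.
case: r => [_|r]; first by apply: (ok_3 Hp); [exact: pn25 | exact: f2_25 | by move=> F h _; exact: f3_25 h].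
case: r => [_|r]; first by exact: pn26.
case: r => [_|r]; first by apply: (ok_3 Hp); [exact: pn27 | exact: f2_27 | exact: f3_27].
case: r => [_|r]; first by apply: (ok_2 Hp); [exact: pn28 | exact: f2_28].
case: r => [_|r]; first by apply: (ok_2 Hp); [exact: pn29 | exact: f2_29].
by [].
Qed.


Definition L1 : seq (seq bool) :=
  [:: [:: false; true; false;  true; false; true;  false; true; false];
      [:: true; true; false;   true; false; true;  true; false; true];
      [:: false; true; false;  true; true; true;   true; false; true];
      [:: true; true; true;    true; true; true;   true; true; false]].
Definition L2 : seq (seq bool) :=
  [:: [:: true; true; false;   true; false; true;  false; true; true];
      [:: true; true; true;    true; true; true;   true; false; false];
      [:: true; true; true;    true; false; true;  true; false; true];
      [:: true; true; true;    true; true; true;   true; false; true];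
      [:: false; true; true;   true; false; true;  true; true; false];
      [:: true; true; true;    true; true; true;   true; true; true]].
Definition L3 : seq (seq bool) :=
  [:: [:: true; true; false;   true; true; true;   false; true; true];
      [:: true; true; false;   true; true; true;   true; false; true];
      [:: false; true; true;   true; true; true;   true; false; true]].
Definition c4 : seq bool := [:: true; true; false;  false; true; true;  true; false; true].

Lemma L1E : pats_case1 = map mkpat3 L1. Proof. by []. Qed.
Lemma L2E : pats_case2 = map mkpat3 L2. Proof. by []. Qed.
Lemma L3E : pats_case3 = map mkpat3 L3. Proof. by []. Qed.
Lemma c4E : pat_case4 = mkpat3 c4. Proof. by []. Qed.

Definition closedb (C s : seq bool) : bool :=
  all (fun ij : 'I_3 * 'I_3 => ~~ (nth false C ij.1 && nth false s (3 * ij.1 + ij.2)) || nth false C ij.2) pairs9.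

Definition cuts : seq ('I_3 * 'I_3 * seq bool) :=
  [:: (i0, i1, [:: true; false; false]); (i1, i0, [:: false; true; false]);
      (i2, i0, [:: false; false; true]); (i0, i2, [:: true; true; false]);
      (i0, i1, [:: true; false; true]); (i1, i0, [:: false; true; true])].

Definition irrb (s : seq bool) : bool :=
  all (fun t : 'I_3 * 'I_3 * seq bool =>
    ~~ [&& nth false t.2 t.1.1, ~~ nth false t.2 t.1.2 & closedb t.2 s]) cuts.

Lemma fwd (T : finType) (e : rel T) (a : pred T) :
  (forall x y, a x -> e x y -> a y) -> forall x y, connect e x y -> a x -> a y.
Proof.
move=> H x y /connectP [q Hq ->]; elim: q x Hq => //= z q IH x /andP [exz Hq] ax.
exact: IH Hq (H _ _ ax exz).
Qed.

Lemma irr_ok s : pat_irreducible (mkpat3 s) -> irrb s.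
Proof.
move=> Hi; apply/allP => -[[i j] C] _ /=; apply/negP => /and3P [Ci Cj /allP Hc].
have Cl : forall x y : 'I_3, nth false C x -> pat_rel (mkpat3 s) x y -> nth false C y.
  move=> x y Cx; rewrite /pat_rel mxE => Sxy.
  by move: (Hc _ (in_pairs9 x y)); rewrite /= Cx Sxy.
by move: Cj; rewrite (fwd Cl (Hi i j) Ci).
Qed.

Definition chk (s : seq bool) : bool :=
  irrb s ==> (let r := find (equivb s) reps in
    [&& (r < 30)%N, has (equivb s) L1 == (nth 0%N codes r == 1%N),
        has (equivb s) L2 == (nth 0%N codes r == 2%N),
        has (equivb s) L3 == (nth 0%N codes r == 3%N) &
        equivb s c4 == (nth 0%N codes r == 4%N)]).

Lemma chk_all b0 b1 b2 b3 b4 b5 b6 b7 b8 : chk [:: b0; b1; b2; b3; b4; b5; b6; b7; b8].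
Proof.
by case: b0; case: b1; case: b2; case: b3; case: b4; case: b5; case: b6; case: b7; case: b8; vm_compute.
Qed.

Lemma ex_has s L : (exists2 B, B \in map mkpat3 L & pat_equiv (mkpat3 s) B) <-> has (equivb s) L.
Proof.
split.
  by move=> [B /mapP [t Ht ->] He]; apply/hasP; exists t => //; apply/equiv_ok.
by move=> /hasP [t Ht He]; exists (mkpat3 t); [apply: map_f | apply/equiv_ok].
Qed.

Lemma finish c p (b1 b2 b3 b4 : bool) (X1 X2 X3 X4 : Prop) :
  (X1 <-> b1) -> (X2 <-> b2) -> (X3 <-> b3) -> (X4 <-> b4) ->
  b1 = (c == 1)%N -> b2 = (c == 2)%N -> b3 = (c == 3)%N -> b4 = (c == 4)%N ->
  (condp c p <-> X1 \/ (X2 /\ (p != 2)%N) \/ (X3 /\ (p \notin [:: 2%N; 3%N])%N) \/ (X4 /\ cube_unity_splits 'F_p)).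
Proof.
move=> E1 E2 E3 E4 B1 B2 B3 B4; subst b1 b2 b3 b4.
case: c E1 E2 E3 E4 => [|[|[|[|[|c]]]]]; rewrite -!eqnE /= => E1 E2 E3 E4; rewrite /condp;
  intuition (try discriminate);
  match goal with H : is_true true -> _ |- _ =>
    first [ by left; apply: H
          | by right; left; split => //; apply: H
          | by right; right; left; split => //; apply: H
          | by right; right; right; split => //; apply: H ] end.
Qed.

Local Close Scope ring_scope.
Theorem theorem5p3 (p : nat) (A : 'M[bool]_3) :
  prime p -> pat_irreducible A ->
  (potentially_nilpotent 'F_p A <->
     (exists2 B, B \in pats_case1 & pat_equiv A B)
  \/ ((exists2 B, B \in pats_case2 & pat_equiv A B) /\ p != 2)
  \/ ((exists2 B, B \in pats_case3 & pat_equiv A B) /\ p \notin [:: 2; 3])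
  \/ (pat_equiv A pat_case4 /\ cube_unity_splits 'F_p)).
Proof.
move=> Hp Hirr.
have Hc := chk_all (A i0 i0) (A i0 i1) (A i0 i2) (A i1 i0) (A i1 i1) (A i1 i2) (A i2 i0) (A i2 i1) (A i2 i2).
have EA : A = mkpat3 [:: A i0 i0; A i0 i1; A i0 i2; A i1 i0; A i1 i1; A i1 i2; A i2 i0; A i2 i1; A i2 i2].
  by apply/matrixP => i j; rewrite mxE; have [->|[->|->]] := ord3 i; have [->|[->|->]] := ord3 j.
move: Hc EA; move: [:: A i0 i0; _; _; _; _; _; _; _; _] => s Hc EA.
rewrite EA in Hirr *.
move: Hc; rewrite /chk (irr_ok Hirr) /=.
set r := find (equivb s) reps.
move=> /and5P [Hr /eqP B1 /eqP B2 /eqP B3 /eqP B4].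
have HR : equivb s (nth [::] reps r) by apply: nth_find; rewrite has_find.
have PE : pat_equiv (mkpat3 s) (mkpat3 (nth [::] reps r)) by apply/equiv_ok.
apply: iff_trans; first by split; apply: PN_equiv; [exact: PE | exact: pat_equiv_sym].
apply: iff_trans; first exact: (rep_ok Hp Hr).
rewrite L1E L2E L3E c4E.
exact: (finish _ (ex_has s L1) (ex_has s L2) (ex_has s L3) (equiv_ok s c4) B1 B2 B3 B4).
Qed.
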